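(* Let $K$ be a field of characteristic different from $2$, let $K^{\mathrm{sep}}$ be a separable closure of $K$ with $G_K=\mathrm{Gal}(K^{\mathrm{sep}}/K)$, and let $E/K$ be an elliptic curve. The following statements are equivalent: (1) $E$ is a Legendre elliptic curve over $K$; (2) $E$ can be given (over $K$) by an equation $y^2=(x-a)(x-b)(x-c)$ with $a,b,c\in K$, in which at least one of $\pm(a-b),\pm(b-c),\pm(c-a)$ is a square in $K^*$; (3) all points of order $2$ on $E$ are $K$-rational, and there exists a point $P\in E(K^{\mathrm{sep}})[4]$ such that $-P$ is not in the $G_K$-orbit of $P$.
   Context: An elliptic curve $E/K$ (with $\mathrm{char}\,K\neq 2$) is called a Legendre elliptic curve over $K$ if there exists $\lambda\in K$, $\lambda\neq 0,1$, such that $E$ is isomorphic over $K$ to the curve $E_\lambda: y^2=x(x-1)(x-\lambda)$. *)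

(* Defs.v *)
From HB Require Import structures.
From mathcomp Require Import all_boot all_order all_algebra all_field.
Set Implicit Arguments. Unset Strict Implicit. Unset Printing Implicit Defensive.
Import GRing.Theory.
Local Open Scope ring_scope.

(* Long Weierstrass equation  y^2 + a1 xy + a3 y = x^3 + a2 x^2 + a4 x + a6 *)
Record wcoef (F : Type) := WCoef { wa1 : F; wa2 : F; wa3 : F; wa4 : F; wa6 : F }.

Definition wmap (F G : Type) (f : F -> G) (E : wcoef F) : wcoef G :=
  WCoef (f (wa1 E)) (f (wa2 E)) (f (wa3 E)) (f (wa4 E)) (f (wa6 E)).

Section Weierstrass.
Variable F : fieldType.
Implicit Types (E : wcoef F).

Definition wb2 E := wa1 E ^+ 2 + 4 * wa2 E.
Definition wb4 E := 2 * wa4 E + wa1 E * wa3 E.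
Definition wb6 E := wa3 E ^+ 2 + 4 * wa6 E.
Definition wb8 E := wa1 E ^+ 2 * wa6 E + 4 * wa2 E * wa6 E - wa1 E * wa3 E * wa4 E
  + wa2 E * wa3 E ^+ 2 - wa4 E ^+ 2.
Definition wdisc E := - wb2 E ^+ 2 * wb8 E - 8 * wb4 E ^+ 3 - 27 * wb6 E ^+ 2
  + 9 * wb2 E * wb4 E * wb6 E.

Definition elliptic E := wdisc E != 0.

(* projective points: None is the point at infinity O *)
Definition wpoint := option (F * F).

Definition on_curve E (P : wpoint) : bool :=
  match P with
  | None => true
  | Some (x, y) => y ^+ 2 + wa1 E * x * y + wa3 E * y ==
                   x ^+ 3 + wa2 E * x ^+ 2 + wa4 E * x + wa6 E
  end.

Definition wneg E (P : wpoint) : wpoint :=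
  match P with
  | None => None
  | Some (x, y) => Some (x, - y - wa1 E * x - wa3 E)
  end.

(* chord-tangent group law (Silverman, Alg. III.2.3) *)
Definition wadd E (P Q : wpoint) : wpoint :=
  match P, Q with
  | None, _ => Q
  | _, None => P
  | Some (x1, y1), Some (x2, y2) =>
    if (x1 == x2) && (y1 + y2 + wa1 E * x2 + wa3 E == 0) then None else
    let: (l, n) :=
      if x1 != x2 then ((y2 - y1) / (x2 - x1), (y1 * x2 - y2 * x1) / (x2 - x1))
      else ((3 * x1 ^+ 2 + 2 * wa2 E * x1 + wa4 E - wa1 E * y1)
              / (2 * y1 + wa1 E * x1 + wa3 E),
            (- x1 ^+ 3 + wa4 E * x1 + 2 * wa6 E - wa3 E * y1)
              / (2 * y1 + wa1 E * x1 + wa3 E)) in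
    let x3 := l ^+ 2 + wa1 E * l - wa2 E - x1 - x2 in
    Some (x3, - (l + wa1 E) * x3 - n - wa3 E)
  end.

Definition wmul E (n : nat) (P : wpoint) : wpoint := iter n (wadd E P) None.

(* E' is obtained from E by an admissible change of variables over F
   x = u^2 x' + r, y = u^3 y' + s u^2 x' + t  (Silverman III.1, Table 3.1);
   these are exactly the isomorphisms over F of Weierstrass models (III.3.1b). *)
Definition wiso E E' : Prop :=
  exists u r s t : F, u != 0 /\ [/\
    u * wa1 E' = wa1 E + 2 * s,
    u ^+ 2 * wa2 E' = wa2 E - s * wa1 E + 3 * r - s ^+ 2,
    u ^+ 3 * wa3 E' = wa3 E + r * wa1 E + 2 * t,
    u ^+ 4 * wa4 E' = wa4 E - s * wa3 E + 2 * r * wa2 E - (t + r * s) * wa1 E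
                      + 3 * r ^+ 2 - 2 * s * t &
    u ^+ 6 * wa6 E' = wa6 E + r * wa4 E + r ^+ 2 * wa2 E + r ^+ 3 - t * wa3 E
                      - t ^+ 2 - r * t * wa1 E].

(* y^2 = (x-a)(x-b)(x-c) *)
Definition wcubic (a b c : F) : wcoef F :=
  WCoef 0 (- (a + b + c)) 0 (a * b + b * c + c * a) (- (a * b * c)).

Definition wlegendre (l : F) : wcoef F := wcubic 0 1 l.

Definition is_nz_square (d : F) : Prop := exists t : F, t != 0 /\ t ^+ 2 = d.

End Weierstrass.

Definition legendre_curve (K : fieldType) (E : wcoef K) : Prop :=
  exists l : K, [/\ l != 0, l != 1 & wiso E (wlegendre l)].

Definition cubic_square_model (K : fieldType) (E : wcoef K) : Prop :=
  exists a b c : K, wiso E (wcubic a b c) /\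
    (is_nz_square (a - b) \/ is_nz_square (b - a) \/ is_nz_square (b - c) \/
     is_nz_square (c - b) \/ is_nz_square (c - a) \/ is_nz_square (a - c)).

Definition is_sep_closure (K L : fieldType) (iota : {rmorphism K -> L}) : Prop :=
  (forall x : L, exists p : {poly K},
      [/\ p != 0, separable_poly p & root (map_poly iota p) x]) /\
  (forall p : {poly L}, separable_poly p -> (1 < size p)%N -> exists x, root p x).

Definition in_GK (K L : fieldType) (iota : {rmorphism K -> L})
  (sigma : {rmorphism L -> L}) : Prop :=
  bijective sigma /\ forall a : K, sigma (iota a) = iota a.

Definition point_map (F G : Type) (f : F -> G) (P : option (F * F)) : option (G * G) :=
  match P with None => None | Some (x, y) => Some (f x, f y) end.

Definition cond3 (K L : fieldType) (iota : {rmorphism K -> L}) (E : wcoef K) : Prop :=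
  let EL := wmap iota E in
  (forall P : wpoint L, on_curve EL P -> P != None -> wadd EL P P = None ->
     exists Q : wpoint K, on_curve E Q /\ P = point_map iota Q) /\
  (exists P : wpoint L, [/\ on_curve EL P, wmul EL 4 P = None &
     ~ exists sigma : {rmorphism L -> L},
         in_GK iota sigma /\ point_map sigma P = wneg EL P]).

(* Main.v *)
Require Import Defs.
From HB Require Import structures.
From mathcomp Require Import all_boot all_order all_algebra all_field.
From mathcomp Require Import boolp classical_sets.
From mathcomp Require Import ring zify.
Set Implicit Arguments. Unset Strict Implicit. Unset Printing Implicit Defensive.
Import GRing.Theory.
Local Open Scope ring_scope.
Section Generic.
Variable F : fieldType.
Implicit Types (E : wcoef F).

Definition crel E E' (u r s t : F) : Prop := [/\
    u * wa1 E' = wa1 E + 2 * s,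
    u ^+ 2 * wa2 E' = wa2 E - s * wa1 E + 3 * r - s ^+ 2,
    u ^+ 3 * wa3 E' = wa3 E + r * wa1 E + 2 * t,
    u ^+ 4 * wa4 E' = wa4 E - s * wa3 E + 2 * r * wa2 E - (t + r * s) * wa1 E
                      + 3 * r ^+ 2 - 2 * s * t &
    u ^+ 6 * wa6 E' = wa6 E + r * wa4 E + r ^+ 2 * wa2 E + r ^+ 3 - t * wa3 E
                      - t ^+ 2 - r * t * wa1 E].

Lemma crel_solve E E' u r s t : crel E E' u r s t ->
  E = WCoef (u * wa1 E' - 2 * s)
            (u ^+ 2 * wa2 E' + s * (u * wa1 E' - 2 * s) - 3 * r + s ^+ 2)
            (u ^+ 3 * wa3 E' - r * (u * wa1 E' - 2 * s) - 2 * t)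
            (u ^+ 4 * wa4 E' + s * (u ^+ 3 * wa3 E' - r * (u * wa1 E' - 2 * s) - 2 * t)
               - 2 * r * (u ^+ 2 * wa2 E' + s * (u * wa1 E' - 2 * s) - 3 * r + s ^+ 2)
               + (t + r * s) * (u * wa1 E' - 2 * s) - 3 * r ^+ 2 + 2 * s * t)
            (u ^+ 6 * wa6 E' - r * (u ^+ 4 * wa4 E' + s * (u ^+ 3 * wa3 E' - r * (u * wa1 E' - 2 * s) - 2 * t)
               - 2 * r * (u ^+ 2 * wa2 E' + s * (u * wa1 E' - 2 * s) - 3 * r + s ^+ 2)
               + (t + r * s) * (u * wa1 E' - 2 * s) - 3 * r ^+ 2 + 2 * s * t)
               - r ^+ 2 * (u ^+ 2 * wa2 E' + s * (u * wa1 E' - 2 * s) - 3 * r + s ^+ 2) - r ^+ 3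
               + t * (u ^+ 3 * wa3 E' - r * (u * wa1 E' - 2 * s) - 2 * t) + t ^+ 2
               + r * t * (u * wa1 E' - 2 * s)).
Proof.
rewrite /crel; case: E => a1 a2 a3 a4 a6 /=; case: E' => b1 b2 b3 b4 b6 /= [h1 h2 h3 h4 h6].
have e1 : a1 = u * b1 - 2 * s by rewrite h1; ring.
subst a1.
have e2 : a2 = u ^+ 2 * b2 + s * (u * b1 - 2 * s) - 3 * r + s ^+ 2 by rewrite h2; ring.
subst a2.
have e3 : a3 = u ^+ 3 * b3 - r * (u * b1 - 2 * s) - 2 * t by rewrite h3; ring.
subst a3.
have e4 : a4 = u ^+ 4 * b4 + s * (u ^+ 3 * b3 - r * (u * b1 - 2 * s) - 2 * t)
               - 2 * r * (u ^+ 2 * b2 + s * (u * b1 - 2 * s) - 3 * r + s ^+ 2)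
               + (t + r * s) * (u * b1 - 2 * s) - 3 * r ^+ 2 + 2 * s * t by rewrite h4; ring.
subst a4.
have e6 : a6 = u ^+ 6 * b6 - r * (u ^+ 4 * b4 + s * (u ^+ 3 * b3 - r * (u * b1 - 2 * s) - 2 * t)
               - 2 * r * (u ^+ 2 * b2 + s * (u * b1 - 2 * s) - 3 * r + s ^+ 2)
               + (t + r * s) * (u * b1 - 2 * s) - 3 * r ^+ 2 + 2 * s * t)
               - r ^+ 2 * (u ^+ 2 * b2 + s * (u * b1 - 2 * s) - 3 * r + s ^+ 2) - r ^+ 3
               + t * (u ^+ 3 * b3 - r * (u * b1 - 2 * s) - 2 * t) + t ^+ 2
               + r * t * (u * b1 - 2 * s) by rewrite h6; ring.
by subst a6.
Qed.

Lemma crel_disc E E' u r s t : crel E E' u r s t -> wdisc E = u ^+ 12 * wdisc E'.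
Proof.
move=> /crel_solve ->; case: E' => b1 b2 b3 b4 b6.
rewrite /wdisc /wb2 /wb4 /wb6 /wb8 /=; ring.
Qed.


Definition cmap (u r s t : F) (P : wpoint F) : wpoint F :=
  match P with
  | None => None
  | Some (x, y) => Some (u ^+ 2 * x + r, u ^+ 3 * y + s * u ^+ 2 * x + t)
  end.

Definition fcurve E (x y : F) := y ^+ 2 + wa1 E * x * y + wa3 E * y -
  (x ^+ 3 + wa2 E * x ^+ 2 + wa4 E * x + wa6 E).

Lemma on_curveS E x y : on_curve E (Some (x, y)) = (fcurve E x y == 0).
Proof. by rewrite /= /fcurve subr_eq0. Qed.

Lemma cmap_on_curve E E' u r s t P : crel E E' u r s t -> u != 0 ->
  on_curve E (cmap u r s t P) = on_curve E' P.
Proof.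
move=> h hu; case: P => [[x y]|] //.
rewrite /cmap !on_curveS (crel_solve h).
case: E' {h} => b1 b2 b3 b4 b6; rewrite /fcurve /=.
set d := (X in X == 0).
have -> : d = u ^+ 6 * (y ^+ 2 + b1 * x * y + b3 * y - (x ^+ 3 + b2 * x ^+ 2 + b4 * x + b6)).
  by rewrite /d; ring.
by rewrite mulf_eq0 expf_eq0 (negbTE hu).
Qed.

Lemma cmap_neg E E' u r s t P : crel E E' u r s t ->
  cmap u r s t (wneg E' P) = wneg E (cmap u r s t P).
Proof.
move=> h; case: P => [[x y]|] //=; rewrite (crel_solve h) /=.
congr (Some (_, _)); ring.
Qed.

Lemma crel_inv E E' u r s t : u != 0 -> crel E E' u r s t ->
  crel E' E u^-1 (- r / u ^+ 2) (- s / u) ((r * s - t) / u ^+ 3).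
Proof.
move=> hu h; rewrite (crel_solve h).
case: E' {h} => b1 b2 b3 b4 b6; rewrite /crel /=.
split; field; exact: hu.
Qed.

Lemma cmap_invK u r s t P : u != 0 ->
  cmap u^-1 (- r / u ^+ 2) (- s / u) ((r * s - t) / u ^+ 3) (cmap u r s t P) = P.
Proof.
move=> hu; case: P => [[x y]|] //=; congr (Some (_, _)); field; exact: hu.
Qed.

Lemma cmap_inj u r s t P Q : u != 0 -> cmap u r s t P = cmap u r s t Q -> P = Q.
Proof.
move=> hu e; rewrite -(cmap_invK r s t P hu) -(cmap_invK r s t Q hu); by rewrite e.
Qed.

Lemma crel_trans E E' E'' u r s t u' r' s' t' :
  crel E E' u r s t -> crel E' E'' u' r' s' t' ->
  crel E E'' (u * u') (u ^+ 2 * r' + r) (u * s' + s) (u ^+ 3 * t' + s * u ^+ 2 * r' + t).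
Proof.
move=> h h'; rewrite (crel_solve h) (crel_solve h').
case: E'' {h h'} => b1 b2 b3 b4 b6; rewrite /crel /=.
split; ring.
Qed.

Lemma wiso_trans E E' E'' : wiso E E' -> wiso E' E'' -> wiso E E''.
Proof.
move=> [u [r [s [t [hu h]]]]] [u' [r' [s' [t' [hu' h']]]]].
exists (u * u'), (u ^+ 2 * r' + r), (u * s' + s), (u ^+ 3 * t' + s * u ^+ 2 * r' + t).
by split; [rewrite mulf_neq0 | exact: (crel_trans h h')].
Qed.

Lemma wiso_sym E E' : wiso E E' -> wiso E' E.
Proof.
move=> [u [r [s [t [hu h]]]]].
exists u^-1, (- r / u ^+ 2), (- s / u), ((r * s - t) / u ^+ 3).
by split; [rewrite invr_eq0 | exact: crel_inv].
Qed.

Lemma crel_id E : crel E E 1 0 0 0.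
Proof. by case: E => a1 a2 a3 a4 a6; rewrite /crel /=; split; ring. Qed.

End Generic.
Section Add.
Variable F : fieldType.
Implicit Types (E : wcoef F).

Definition slope E (x1 y1 x2 y2 : F) :=
  if x1 != x2 then (y2 - y1) / (x2 - x1)
  else (3 * x1 ^+ 2 + 2 * wa2 E * x1 + wa4 E - wa1 E * y1)
        / (2 * y1 + wa1 E * x1 + wa3 E).
Definition addx E (l x1 x2 : F) := l ^+ 2 + wa1 E * l - wa2 E - x1 - x2.
Definition addy E (l x1 y1 x3 : F) := - (l + wa1 E) * x3 - (y1 - l * x1) - wa3 E.

Lemma tangent_eq E x1 y1 y2 : fcurve E x1 y1 = 0 -> fcurve E x1 y2 = 0 ->
  y1 + y2 + wa1 E * x1 + wa3 E != 0 -> y2 = y1.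
Proof.
move=> h1 h2 hn.
have : (y2 - y1) * (y1 + y2 + wa1 E * x1 + wa3 E) = 0.
  have -> : (y2 - y1) * (y1 + y2 + wa1 E * x1 + wa3 E) = fcurve E x1 y2 - fcurve E x1 y1.
    by rewrite /fcurve; ring.
  by rewrite h1 h2 subrr.
by move/eqP; rewrite mulf_eq0 (negbTE hn) orbF subr_eq0 => /eqP.
Qed.

Lemma wadd_SS E x1 y1 x2 y2 :
  on_curve E (Some (x1, y1)) -> on_curve E (Some (x2, y2)) ->
  wadd E (Some (x1, y1)) (Some (x2, y2)) =
  if (x1 == x2) && (y1 + y2 + wa1 E * x2 + wa3 E == 0) then None
  else Some (addx E (slope E x1 y1 x2 y2) x1 x2,
             addy E (slope E x1 y1 x2 y2) x1 y1 (addx E (slope E x1 y1 x2 y2) x1 x2)).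
Proof.
rewrite !on_curveS => /eqP c1 /eqP c2.
rewrite /wadd; case: ifP => // hc.
case: (eqVneq x1 x2) => [ex | nx].
  subst x2; move: hc; rewrite eqxx /= => /negbT hc.
  have ey := tangent_eq c1 c2 hc; subst y2.
  rewrite /slope eqxx /=.
  set D := 2 * y1 + wa1 E * x1 + wa3 E.
  have hD : D != 0 by rewrite /D; move: hc; congr (~~ (_ == _)); ring.
  set num := 3 * x1 ^+ 2 + 2 * wa2 E * x1 + wa4 E - wa1 E * y1.
  have key : - x1 ^+ 3 + wa4 E * x1 + 2 * wa6 E - wa3 E * y1 =
     y1 * D - num * x1 - 2 * fcurve E x1 y1 by rewrite /D /num /fcurve; ring.
  rewrite key c1 mulr0 subr0 /addy /addx; congr (Some (_, _)); field; exact: hD.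
rewrite /= /slope nx /addx /addy; congr (Some (_, _)).
have hx : x2 - x1 != 0 by rewrite subr_eq0 eq_sym.
field; exact: hx.
Qed.

Lemma fcurve_neg E x y : fcurve E x (- y - wa1 E * x - wa3 E) = fcurve E x y.
Proof. by rewrite /fcurve; ring. Qed.

Lemma wneg_on_curve E P : on_curve E P -> on_curve E (wneg E P).
Proof.
by case: P => [[x y]|] //; rewrite /wneg !on_curveS fcurve_neg.
Qed.

Lemma wadd_on_curve E P Q : on_curve E P -> on_curve E Q -> on_curve E (wadd E P Q).
Proof.
case: P => [[x1 y1]|] //; case: Q => [[x2 y2]|] //.
move=> h1 h2; rewrite wadd_SS //; case: ifP => // hc.
move: h1 h2; rewrite !on_curveS => /eqP c1 /eqP c2.
set l := slope E x1 y1 x2 y2.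
set x3 := addx E l x1 x2.
have -> : addy E l x1 y1 x3 = - (l * x3 + (y1 - l * x1)) - wa1 E * x3 - wa3 E
  by rewrite /addy; ring.
rewrite fcurve_neg; apply/eqP.
set nu := y1 - l * x1.
case: (eqVneq x1 x2) => [ex | nx].
  subst x2; move: hc; rewrite eqxx /= => /negbT hc.
  have ey := tangent_eq c1 c2 hc; subst y2.
  set D := 2 * y1 + wa1 E * x1 + wa3 E.
  have hD : D != 0 by rewrite /D; move: hc; congr (~~ (_ == _)); ring.
  set num := 3 * x1 ^+ 2 + 2 * wa2 E * x1 + wa4 E - wa1 E * y1.
  have hl : l = num / D by rewrite /l /slope eqxx.
  have hC : forall t, fcurve E t (l * t + nu) =
     - (t - x1) ^+ 2 * (t - x3) + fcurve E x1 y1 + (D * l - num) * (t - x1).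
    by move=> t; rewrite /nu /x3 /addx /fcurve /D /num; ring.
  have hz : D * l - num = 0 by rewrite hl; field; exact: hD.
  by rewrite hC c1 hz; ring.
have hx : x1 - x2 != 0 by rewrite subr_eq0.
have hl : l = (y2 - y1) / (x2 - x1) by rewrite /l /slope nx.
pose A1 := 2 * l * nu + wa1 E * nu + wa3 E * l - wa4 E + (x1 * x2 + x2 * x3 + x3 * x1).
pose A0 := nu ^+ 2 + wa3 E * nu - wa6 E - x1 * x2 * x3.
have hC : forall t, fcurve E t (l * t + nu) = - ((t - x1) * (t - x2) * (t - x3)) + A0 + A1 * t.
  by move=> t; rewrite /A0 /A1 /nu /x3 /addx /fcurve; ring.
have e1 : A0 + A1 * x1 = 0.
  have := hC x1; rewrite (_ : l * x1 + nu = y1) ?c1; last by rewrite /nu; ring.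
  by move=> ->; ring.
have e2 : A0 + A1 * x2 = 0.
  have := hC x2; rewrite (_ : l * x2 + nu = y2) ?c2; last first.
    rewrite /nu hl; field; by rewrite subr_eq0 eq_sym -subr_eq0.
  by move=> ->; ring.
have eA1 : A1 = 0.
  have : A1 * (x1 - x2) = 0.
    have -> : A1 * (x1 - x2) = (A0 + A1 * x1) - (A0 + A1 * x2) by ring.
    by rewrite e1 e2 subrr.
  by move/eqP; rewrite mulf_eq0 (negbTE hx) orbF => /eqP.
have eA0 : A0 = 0 by move: e1; rewrite eA1 mul0r addr0.
by rewrite hC eA0 eA1; ring.
Qed.


Lemma cmap_add E E' u r s t P Q : crel E E' u r s t -> u != 0 ->
  on_curve E' P -> on_curve E' Q ->
  cmap u r s t (wadd E' P Q) = wadd E (cmap u r s t P) (cmap u r s t Q).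
Proof.
move=> h hu; case: P => [[x1 y1]|] //; case: Q => [[x2 y2]|] // hP hQ.
have hP' : on_curve E (Some (u ^+ 2 * x1 + r, u ^+ 3 * y1 + s * u ^+ 2 * x1 + t)).
  by rewrite -[Some _]/(cmap u r s t (Some (x1, y1))) (cmap_on_curve _ h hu).
have hQ' : on_curve E (Some (u ^+ 2 * x2 + r, u ^+ 3 * y2 + s * u ^+ 2 * x2 + t)).
  by rewrite -[Some _]/(cmap u r s t (Some (x2, y2))) (cmap_on_curve _ h hu).
rewrite [cmap _ _ _ _ (Some (x1, y1))]/= [cmap _ _ _ _ (Some (x2, y2))]/=.
rewrite (wadd_SS hP hQ) (wadd_SS hP' hQ').
have eX : (u ^+ 2 * x1 + r == u ^+ 2 * x2 + r) = (x1 == x2).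
  rewrite -subr_eq0 (_ : _ - _ = u ^+ 2 * (x1 - x2)); last by ring.
  by rewrite mulf_eq0 expf_eq0 (negbTE hu) /= subr_eq0.
move: hP hQ; rewrite !on_curveS => /eqP c1 /eqP c2.
have hE := crel_solve h; clear hP' hQ'; subst E.
case: E' c1 c2 {h} => b1 b2 b3 b4 b6 c1 c2.
rewrite eX /=.
case: (eqVneq x1 x2) => [ex | nx] /=.
  subst x2.
  set c' := y1 + y2 + b1 * x1 + b3.
  have ec : u ^+ 3 * y1 + s * u ^+ 2 * x1 + t + (u ^+ 3 * y2 + s * u ^+ 2 * x1 + t) +
      (u * b1 - 2 * s) * (u ^+ 2 * x1 + r) +
      (u ^+ 3 * b3 - r * (u * b1 - 2 * s) - 2 * t) = u ^+ 3 * c' by rewrite /c'; ring.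
  rewrite ec mulf_eq0 expf_eq0 (negbTE hu) /=.
  case: ifP => // /negbT hc.
  have ey := tangent_eq c1 c2 hc; subst y2.
  set D := 2 * y1 + b1 * x1 + b3.
  have hD : D != 0 by rewrite /D; move: hc; rewrite /c'; congr (~~ (_ == _)); ring.
  have sl : slope (WCoef (u * b1 - 2 * s)
            (u ^+ 2 * b2 + s * (u * b1 - 2 * s) - 3 * r + s ^+ 2)
            (u ^+ 3 * b3 - r * (u * b1 - 2 * s) - 2 * t)
            (u ^+ 4 * b4 + s * (u ^+ 3 * b3 - r * (u * b1 - 2 * s) - 2 * t)
               - 2 * r * (u ^+ 2 * b2 + s * (u * b1 - 2 * s) - 3 * r + s ^+ 2)
               + (t + r * s) * (u * b1 - 2 * s) - 3 * r ^+ 2 + 2 * s * t)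
            (u ^+ 6 * b6 - r * (u ^+ 4 * b4 + s * (u ^+ 3 * b3 - r * (u * b1 - 2 * s) - 2 * t)
               - 2 * r * (u ^+ 2 * b2 + s * (u * b1 - 2 * s) - 3 * r + s ^+ 2)
               + (t + r * s) * (u * b1 - 2 * s) - 3 * r ^+ 2 + 2 * s * t)
               - r ^+ 2 * (u ^+ 2 * b2 + s * (u * b1 - 2 * s) - 3 * r + s ^+ 2) - r ^+ 3
               + t * (u ^+ 3 * b3 - r * (u * b1 - 2 * s) - 2 * t) + t ^+ 2
               + r * t * (u * b1 - 2 * s)))
       (u ^+ 2 * x1 + r) (u ^+ 3 * y1 + s * u ^+ 2 * x1 + t)
       (u ^+ 2 * x1 + r) (u ^+ 3 * y1 + s * u ^+ 2 * x1 + t)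
     = u * slope (WCoef b1 b2 b3 b4 b6) x1 y1 x1 y1 + s.
    rewrite /slope !eqxx /=.
    set DE := (X in _ / X).
    have -> : DE = u ^+ 3 * D by rewrite /DE /D; ring.
    rewrite /D; field; apply/andP; split => //; exact: hD.
  rewrite sl; set l := slope _ x1 y1 x1 y1.
  rewrite /cmap /addx /addy /=; congr (Some (_, _)); ring.
have hx : x2 - x1 != 0 by rewrite subr_eq0 eq_sym.
rewrite /addx /addy /slope /= eX nx /=.
have -> : u ^+ 2 * x2 + r - (u ^+ 2 * x1 + r) = u ^+ 2 * (x2 - x1) by ring.
congr (Some (_, _)); field; apply/andP; split => //; exact: hx.
Qed.

Lemma cmap_mul E E' u r s t n P : crel E E' u r s t -> u != 0 -> on_curve E' P ->
  on_curve E' (wmul E' n P) /\ cmap u r s t (wmul E' n P) = wmul E n (cmap u r s t P).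
Proof.
move=> h hu hP; elim: n => [|n [IH1 IH2]] //=.
split; first exact: wadd_on_curve.
by rewrite (cmap_add h hu hP IH1) IH2.
Qed.

End Add.
Definition subfield_closed (L : fieldType) (D : set L) :=
  [/\ D 1, (forall a b, D a -> D b -> D (a - b)),
      (forall a b, D a -> D b -> D (a * b)) & (forall a, D a -> D a^-1)].

Section SubD.
Variables (L : fieldType) (D : set L) (hD : subfield_closed D).
Definition Dp : pred L := let _ := hD in fun w => `[< D w >].
Fact Dp_closed : divring_closed Dp.
Proof.
case: hD => h1 hB hM hV; split.
- by apply/asboolP.
- by move=> a b /asboolP ha /asboolP hb; apply/asboolP; apply: hB.
- by move=> a b /asboolP ha /asboolP hb; apply/asboolP; apply: hM => //; apply: hV.
Qed.
HB.instance Definition _ := GRing.isDivringClosed.Build L Dp Dp_closed.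
Record subD := SubD { sdval :> L; sdP : sdval \in Dp }.
HB.instance Definition _ := [isSub for sdval].
HB.instance Definition _ := [Choice of subD by <:].
HB.instance Definition _ := [SubChoice_isSubIntegralDomain of subD by <:].
HB.instance Definition _ := [SubIntegralDomain_isSubField of subD by <:].
Definition sdv : {rmorphism subD -> L} := GRing.RMorphism.clone _ _ (val : subD -> L) _.
End SubD.

Definition mk_rmorph (F G : fieldType) (f : F -> G) (h1 : GRing.zmod_morphism f)
  (h2 : GRing.monoid_morphism f) : {rmorphism F -> G} :=
  HB.pack f (GRing.isZmodMorphism.Build F G f h1) (GRing.isMonoidMorphism.Build F G f h2).

Local Notation "p ^^ f" := (map_poly f p) (at level 30, f at level 30).

Section Core.
Variables (F L : fieldType) (v phi : {rmorphism F -> L}) (x y : L) (q : {poly F}).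
Hypotheses (qnz : q != 0) (qx : (q ^^ v).[x] = 0)
  (qmin : forall g : {poly F}, g != 0 -> (g ^^ v).[x] = 0 -> (size q <= size g)%N)
  (qy : (q ^^ phi).[y] = 0).

Lemma core_wd g : (g ^^ v).[x] = 0 -> (g ^^ phi).[y] = 0.
Proof.
move=> gx.
have hm : g %% q = 0.
  case: (eqVneq (g %% q) 0) => // hnz.
  have : ((g %% q) ^^ v).[x] = 0.
    have e := divp_eq g q.
    have : (g ^^ v).[x] = ((g %/ q) ^^ v).[x] * (q ^^ v).[x] + ((g %% q) ^^ v).[x].
      by rewrite {1}e rmorphD rmorphM /= hornerD hornerM.
    by rewrite gx qx mulr0 add0r => <-.
  by move=> /(qmin hnz); rewrite leqNgt ltn_modp qnz.
have e : g = g %/ q * q by rewrite {1}(divp_eq g q) hm addr0.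
by rewrite e rmorphM /= hornerM qy mulr0.
Qed.

Definition Dx : set L := [set w | exists g : {poly F}, w = (g ^^ v).[x]].
Definition fx (w : L) : L :=
  match pselect (Dx w) with
  | left H => ((projT1 (cid H)) ^^ phi).[y]
  | right _ => 0
  end.

Lemma fxE g : fx ((g ^^ v).[x]) = (g ^^ phi).[y].
Proof.
rewrite /fx; case: pselect => [H|nH]; last by exfalso; apply: nH; exists g.
case: (cid H) => g' /= hg'.
have : ((g' - g) ^^ v).[x] = 0 by rewrite rmorphB /= hornerD hornerN -hg' subrr.
move/core_wd; rewrite rmorphB /= hornerD hornerN => /eqP; rewrite subr_eq0 => /eqP.
by [].
Qed.

Lemma q_irr : irreducible_poly q.
Proof.
have hr : root (q ^^ v) x by apply/rootP.
apply/(subfx_irreducibleP hr qnz) => g /rootP gx gnz; exact: qmin.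
Qed.

Lemma Dx_closed : subfield_closed Dx.
Proof.
split.
- by exists 1; rewrite rmorph1 hornerC.
- move=> a b [g1 ->] [g2 ->]; exists (g1 - g2); by rewrite rmorphB /= hornerD hornerN.
- move=> a b [g1 ->] [g2 ->]; exists (g1 * g2); by rewrite rmorphM /= hornerM.
move=> a [g ->].
have [g0|gnz] := eqVneq ((g ^^ v).[x]) 0.
  by rewrite g0 invr0; exists 0; rewrite rmorph0 horner0.
have cop : coprimep q g.
  rewrite irreducible_poly_coprime; last exact: q_irr.
  apply/negP => /dvdpP [h eh].
  by move: gnz; rewrite eh rmorphM /= hornerM qx mulr0 eqxx.
have [[u1 u2] /= hu] := Bezout_eq1_coprimepP _ _ cop.
exists u2.
have : ((u1 * q + u2 * g) ^^ v).[x] = 1 by rewrite hu rmorph1 hornerC.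
rewrite rmorphD !rmorphM /= hornerD !hornerM qx mulr0 add0r => h.
by rewrite -[_^-1]mul1r -h -mulrA mulfV // mulr1.
Qed.

Lemma Dx_base c : Dx (v c).
Proof. by exists c%:P; rewrite map_polyC hornerC. Qed.

Lemma Dx_x : Dx x.
Proof. by exists 'X; rewrite map_polyX hornerX. Qed.

Lemma fx_base c : fx (v c) = phi c.
Proof. by rewrite -[v c](hornerC _ x) -(map_polyC v) fxE map_polyC hornerC. Qed.

Lemma fx_x : fx x = y.
Proof. by rewrite -[x](hornerX x) -(map_polyX v) fxE map_polyX hornerX. Qed.

Lemma fx_B a b : Dx a -> Dx b -> fx (a - b) = fx a - fx b.
Proof.
move=> [g1 ->] [g2 ->].
have -> : (g1 ^^ v).[x] - (g2 ^^ v).[x] = ((g1 - g2) ^^ v).[x]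
  by rewrite rmorphB /= hornerD hornerN.
by rewrite !fxE rmorphB /= hornerD hornerN.
Qed.

Lemma fx_M a b : Dx a -> Dx b -> fx (a * b) = fx a * fx b.
Proof.
move=> [g1 ->] [g2 ->].
have -> : (g1 ^^ v).[x] * (g2 ^^ v).[x] = ((g1 * g2) ^^ v).[x]
  by rewrite rmorphM /= hornerM.
by rewrite !fxE rmorphM /= hornerM.
Qed.

Lemma fx_1 : fx 1 = 1.
Proof. by have := fx_base 1; rewrite !rmorph1. Qed.

End Core.

Section Ext.
Variables (K L : fieldType) (iota : {rmorphism K -> L}).

Definition morph_on (D : set L) (f : L -> L) :=
  [/\ f 1 = 1, (forall a b, D a -> D b -> f (a - b) = f a - f b) &
      (forall a b, D a -> D b -> f (a * b) = f a * f b)].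
Record pext := PExt { pdom : set L; pfun : L -> L }.
Definition valid (e : pext) := [/\ subfield_closed (pdom e), morph_on (pdom e) (pfun e) &
  forall k, pdom e (iota k) /\ pfun e (iota k) = iota k].
Definition extends (e e' : pext) :=
  (forall w, pdom e w -> pdom e' w) /\ (forall w, pdom e w -> pfun e' w = pfun e w).

Lemma extends_refl e : extends e e.
Proof. by split. Qed.
Lemma extends_trans e1 e2 e3 : extends e1 e2 -> extends e2 e3 -> extends e1 e3.
Proof.
move=> [a1 b1] [a2 b2]; split=> w h; first by apply: a2; apply: a1.
by rewrite b2 ?b1 //; apply: a1.
Qed.

Section Valid.
Variables (e : pext) (he : valid e).
Let hD : subfield_closed (pdom e). Proof. by case: he. Qed.
Let hf : morph_on (pdom e) (pfun e). Proof. by case: he. Qed.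
Definition FD := subD hD.

Lemma Dp_mem w : (w \in Dp hD) = `[< pdom e w >].
Proof. by []. Qed.

Lemma FD_mem (w : FD) : pdom e (val w).
Proof. by case: w => w /= /asboolP. Qed.

Fact phi_zmod : GRing.zmod_morphism (fun w : FD => pfun e (val w)).
Proof. by move=> a b; case: hf => _ hB _; rewrite /= hB //; apply: FD_mem. Qed.
Fact phi_mon : GRing.monoid_morphism (fun w : FD => pfun e (val w)).
Proof.
case: hf => h1 _ hM; split; first by rewrite /= h1.
by move=> a b; rewrite /= hM //; apply: FD_mem.
Qed.
Definition phi : {rmorphism FD -> L} := mk_rmorph phi_zmod phi_mon.
Lemma phiE w : phi w = pfun e (val w). Proof. by []. Qed.

Lemma pfun0 : pfun e 0 = 0.
Proof.
case: hf => h1 hB _; case: hD => D1 _ _ _.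
by rewrite -(subrr 1) hB // h1 subrr.
Qed.

Definition tosub (w : L) : FD := insubd (0 : FD) w.
Lemma tosubK w : pdom e w -> val (tosub w) = w.
Proof. by move=> h; rewrite /tosub insubdK //; apply/asboolP. Qed.
Lemma tosub0 : tosub 0 = 0.
Proof.
apply: val_inj; rewrite tosubK //=.
by case: hD => D1 hB _ _; rewrite -(subrr 1); apply: (hB).
Qed.

Definition polyOverD (g : {poly L}) := forall i, pdom e g`_i.

Lemma tosub_polyK g : polyOverD g -> map_poly (sdv hD) (map_poly tosub g) = g.
Proof.
move=> hg; apply/polyP => i.
by rewrite coef_map /= coef_map_id0 ?tosub0 // tosubK.
Qed.

Lemma tosub_polyphi g : polyOverD g -> map_poly phi (map_poly tosub g) = map_poly (pfun e) g.
Proof.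
move=> hg; apply/polyP => i.
by rewrite coef_map /= coef_map_id0 ?tosub0 // coef_map_id0 ?pfun0 // tosubK.
Qed.

Lemma polyOverD_map (g : {poly FD}) : polyOverD (map_poly (sdv hD) g).
Proof. by move=> i; rewrite coef_map; apply: FD_mem. Qed.

Local Notation "p ^^ f" := (map_poly f p) (at level 30, f at level 30).

Lemma step_poly (x y : L) (q : {poly L}) :
  polyOverD q -> q != 0 -> q.[x] = 0 ->
  (forall g : {poly L}, polyOverD g -> g != 0 -> g.[x] = 0 -> (size q <= size g)%N) ->
  (q ^^ pfun e).[y] = 0 ->
  exists e', [/\ valid e', extends e e', pdom e' x & pfun e' x = y].
Proof.
move=> hq qnz qx qmin qy.
pose qF := q ^^ tosub.
have eqv : qF ^^ sdv hD = q by apply: tosub_polyK.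
have eqp : qF ^^ phi = q ^^ pfun e by apply: tosub_polyphi.
have qFnz : qF != 0 by apply: contraNneq qnz => h; rewrite -eqv h rmorph0.
have qFx : (qF ^^ sdv hD).[x] = 0 by rewrite eqv.
have qFmin : forall g : {poly FD}, g != 0 -> (g ^^ sdv hD).[x] = 0 -> (size qF <= size g)%N.
  move=> g gnz gx.
  have := qmin _ (polyOverD_map g); rewrite map_poly_eq0 gnz => /(_ isT gx).
  by rewrite size_map_poly -eqv size_map_poly.
have qFy : (qF ^^ phi).[y] = 0 by rewrite eqp.
pose e' := PExt (Dx (sdv hD) x) (fx (sdv hD) phi x y).
exists e'; split.
- split.
  + exact: (Dx_closed qFnz qFx qFmin).
  + split; first exact: (fx_1 qFnz qFx qFmin qFy).
    * by move=> a b ha hb; apply: (fx_B qFnz qFx qFmin qFy).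
    * by move=> a b ha hb; apply: (fx_M qFnz qFx qFmin qFy).
  + move=> k; case: he => _ _ /(_ k) [hk1 hk2].
    have e1 : sdv hD (tosub (iota k)) = iota k by rewrite /= tosubK.
    split; first by rewrite -e1; exact: Dx_base.
    by rewrite /= -{1}e1 (fx_base qFnz qFx qFmin qFy) phiE tosubK.
- split=> w hw; rewrite /e' /=;
    have e1 : sdv hD (tosub w) = w by rewrite /= tosubK.
    by rewrite -e1; exact: Dx_base.
  by rewrite -{1}e1 (fx_base qFnz qFx qFmin qFy) phiE tosubK.
- exact: Dx_x.
- exact: (fx_x qFnz qFx qFmin qFy).
Qed.

Hypothesis Hsep : is_sep_closure iota.

Lemma iota_polyOverD (p : {poly K}) : polyOverD (p ^^ iota).
Proof. by move=> i; rewrite coef_map; case: he => _ _ /(_ p`_i) []. Qed.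

Lemma step_any (x : L) : exists e', [/\ valid e', extends e e' & pdom e' x].
Proof.
case: Hsep => Halg Hroot; have [p [pnz psep px]] := Halg x.
pose pL := p ^^ iota.
have pLD : polyOverD pL by apply: iota_polyOverD.
have pLnz : pL != 0 by rewrite map_poly_eq0.
have pLx : pL.[x] = 0 by apply/rootP.
pose P n := `[< exists g, [/\ polyOverD g, g != 0, g.[x] = 0 & size g = n] >].
have exP : exists n, P n by exists (size pL); apply/asboolP; exists pL.
case: (ex_minnP exP) => n /asboolP [q [qD qnz qx qs]] hmin.
have qmin : forall g, polyOverD g -> g != 0 -> g.[x] = 0 -> (size q <= size g)%N.
  by move=> g gD gnz gx; rewrite qs; apply: hmin; apply/asboolP; exists g.
pose qF := q ^^ tosub; pose pF := pL ^^ tosub.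
have eqv : qF ^^ sdv hD = q by apply: tosub_polyK.
have eqpv : pF ^^ sdv hD = pL by apply: tosub_polyK.
have eqp : qF ^^ phi = q ^^ pfun e by apply: tosub_polyphi.
have eqpp : pF ^^ phi = pL ^^ pfun e by apply: tosub_polyphi.
have hm : pF %% qF = 0.
  case: (eqVneq (pF %% qF) 0) => // hnz.
  have qFnz : qF != 0 by apply: contraNneq qnz => h; rewrite -eqv h rmorph0.
  have : (size q <= size ((pF %% qF) ^^ sdv hD))%N.
    apply: qmin; first exact: polyOverD_map.
      by rewrite map_poly_eq0.
    have e1 := divp_eq pF qF.
    have : (pF ^^ sdv hD).[x] = ((pF %/ qF) ^^ sdv hD).[x] * (qF ^^ sdv hD).[x] +
        ((pF %% qF) ^^ sdv hD).[x] by rewrite {1}e1 rmorphD rmorphM /= hornerD hornerM.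
    by rewrite eqv eqpv pLx qx mulr0 add0r => <-.
  by rewrite size_map_poly -eqv size_map_poly leqNgt ltn_modp qFnz.
have hdiv : qF ^^ phi %| pL ^^ pfun e.
  rewrite -eqpp {1}(divp_eq pF qF) hm addr0 rmorphM /=.
  exact: dvdp_mull.
have epL : pL ^^ pfun e = pL.
  apply/polyP => i; rewrite coef_map_id0 ?pfun0 // /pL coef_map.
  by case: he => _ _ /(_ p`_i) [].
have sep : separable_poly (qF ^^ phi).
  apply: (dvdp_separable hdiv); rewrite epL /pL separable_map //.
have sz : (1 < size (qF ^^ phi))%N.
  rewrite size_map_poly -(size_map_poly (sdv hD)) eqv.
  by apply: (@root_size_gt1 _ x q qnz); apply/rootP.
have [y hy] := Hroot _ sep sz.
have qy : (q ^^ pfun e).[y] = 0 by rewrite -eqp; apply/rootP.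
have [e' [h1 h2 h3 _]] := step_poly qD qnz qx qmin qy.
by exists e'.
Qed.

End Valid.

Hypothesis Hsep : is_sep_closure iota.

Section Zorn.
Variables (e0 : pext) (he0 : valid e0).

Definition Tz := {e : pext | valid e /\ extends e0 e}.
Definition t0 : Tz := exist _ e0 (conj he0 (extends_refl e0)).
Definition Rz (a b : Tz) : bool := `[< extends (sval a) (sval b) >].

Lemma Rz_t0 t : Rz t0 t.
Proof. by apply/asboolP; exact: (proj2 (svalP t)). Qed.

Section Chain.
Variables (A : set Tz) (Atot : total_on A Rz).
Let B t := A t \/ t = t0.
Lemma Btot s t : B s -> B t -> Rz s t \/ Rz t s.
Proof.
move=> [hs|->] [ht|->]; first exact: Atot.
- by right; apply: Rz_t0.
- by left; apply: Rz_t0.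
- by left; apply: Rz_t0.
Qed.

Definition Udom (w : L) := exists t, B t /\ pdom (sval t) w.
Definition Ufun (w : L) : L :=
  match pselect (Udom w) with
  | left H => pfun (sval (projT1 (cid H))) w
  | right _ => 0
  end.
Definition U := PExt Udom Ufun.

Lemma UE t w : B t -> pdom (sval t) w -> Ufun w = pfun (sval t) w.
Proof.
move=> Bt hw; rewrite /Ufun; case: pselect => [H|nH]; last first.
  by exfalso; apply: nH; exists t.
case: (cid H) => t' [Bt' hw'] /=.
case: (Btot Bt Bt') => /asboolP [_ h]; first by apply: h.
by rewrite h.
Qed.

Lemma U2 w1 w2 : Udom w1 -> Udom w2 -> exists t, [/\ B t, pdom (sval t) w1 & pdom (sval t) w2].
Proof.
move=> [t1 [B1 h1]] [t2 [B2 h2]].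
case: (Btot B1 B2) => /asboolP [h _].
  by exists t2; split => //; apply: h.
by exists t1; split => //; apply: h.
Qed.

Lemma B0 : B t0. Proof. by right. Qed.

Lemma U_valid : valid U.
Proof.
have vt : forall t : Tz, valid (sval t) by move=> t; exact: (proj1 (svalP t)).
split.
- split.
  + exists t0; split; first exact: B0.
    by case: he0 => [[]].
  + move=> a b ha hb; have [t [Bt h1 h2]] := U2 ha hb.
    by exists t; split => //; case: (vt t) => [[_ hB _ _] _ _]; apply: (hB).
  + move=> a b ha hb; have [t [Bt h1 h2]] := U2 ha hb.
    by exists t; split => //; case: (vt t) => [[_ _ hM _] _ _]; apply: (hM).
  + move=> a [t [Bt h]]; exists t; split => //.
    by case: (vt t) => [[_ _ _ hV] _ _]; apply: (hV).
- split.
  + have h1 : pdom e0 1 by case: he0 => [[]].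
    by rewrite /= (UE B0 h1) /=; case: he0 => _ [].
  + move=> a b ha hb; have [t [Bt h1 h2]] := U2 ha hb.
    case: (vt t) => [[_ hB _ _] [_ fB _] _].
    by rewrite /= (UE Bt (hB _ _ h1 h2)) (UE Bt h1) (UE Bt h2) fB.
  + move=> a b ha hb; have [t [Bt h1 h2]] := U2 ha hb.
    case: (vt t) => [[_ _ hM _] [_ _ fM] _].
    by rewrite /= (UE Bt (hM _ _ h1 h2)) (UE Bt h1) (UE Bt h2) fM.
- move=> k; case: he0 => _ _ /(_ k) [hk1 hk2].
  split; first by exists t0; split => //; exact: B0.
  by rewrite /= (UE B0 hk1).
Qed.

Lemma U_ext : extends e0 U.
Proof.
split=> w hw; first by exists t0; split => //; exact: B0.
by rewrite /= (UE B0 hw).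
Qed.

Definition Ut : Tz := exist _ U (conj U_valid U_ext).

Lemma Ut_ub s : A s -> Rz s Ut.
Proof.
move=> As; apply/asboolP; split=> w hw; first by exists s; split => //; left.
by rewrite /= (UE (or_introl As) hw).
Qed.
End Chain.

Lemma zorn_total : exists f : L -> L, [/\ morph_on setT f,
  forall k, f (iota k) = iota k & forall w, pdom e0 w -> f w = pfun e0 w].
Proof.
have : exists t, premaximal Rz t.
  apply: (@ZL_preorder Tz t0 Rz).
  - by move=> t; apply/asboolP; apply: extends_refl.
  - by move=> r s t /asboolP h1 /asboolP h2; apply/asboolP; apply: extends_trans h1 h2.
  - by move=> A Atot; exists (Ut Atot) => s As; apply: Ut_ub.
case=> m hm.
have vm : valid (sval m) by exact: (proj1 (svalP m)).
have all : forall x, pdom (sval m) x.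
  move=> x; have [e' [ve' ee' xe']] := step_any vm Hsep x.
  have ext0 : extends e0 e' by apply: extends_trans ee'; exact: (proj2 (svalP m)).
  pose m' : Tz := exist _ e' (conj ve' ext0).
  have /hm /asboolP [h _] : Rz m m' by apply/asboolP.
  exact: h.
exists (pfun (sval m)); split.
- case: vm => _ [h1 hB hM] _; split => // a b _ _; [exact: hB | exact: hM].
- by move=> k; case: vm => _ _ /(_ k) [].
- by move=> w hw; have [_ h] := proj2 (svalP m); apply: h.
Qed.
End Zorn.

Lemma surj_fix (s : {rmorphism L -> L}) : (forall k, s (iota k) = iota k) ->
  forall z, exists w, s w = z.
Proof.
move=> hs z; case: Hsep => Halg _; have [p [pnz _ pz]] := Halg z.
pose pL := map_poly iota p.
have pLnz : pL != 0 by rewrite map_poly_eq0.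
have pLs : map_poly s pL = pL.
  by apply/polyP => i; rewrite /pL !coef_map /= hs.
pose P n := `[< exists r : seq L, [/\ uniq r, all (root pL) r & size r = n] >].
have exP : exists n, P n by exists 0%N; apply/asboolP; exists [::].
have ubP : forall n, P n -> (n <= size pL)%N.
  by move=> n /asboolP [r [ur ar <-]]; apply: ltnW; apply: max_poly_roots.
case: (ex_maxnP exP ubP) => n /asboolP [r [ur ar sr]] hmax.
have maxr : forall a, root pL a -> a \in r.
  move=> a ha; apply/negPn/negP => har.
  have : P n.+1 by apply/asboolP; exists (a :: r); rewrite /= har ur ha ar sr.
  by move/hmax; rewrite ltnn.
have zr : z \in r by apply: maxr.
have usr : uniq (map s r) by rewrite map_inj_uniq //; apply: fmorph_inj.
have sub : {subset map s r <= r}.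
  move=> b /mapP [a ar' ->]; apply: maxr.
  by rewrite -pLs; apply: rmorph_root; move/allP: ar => /(_ a ar').
have szr : (size r <= size (map s r))%N by rewrite size_map.
have [_ eq] := uniq_min_size usr sub szr.
by move: zr; rewrite -eq => /mapP [a _ ->]; exists a.
Qed.

Lemma galois_ext (e0 : pext) : valid e0 ->
  exists s : {rmorphism L -> L}, in_GK iota s /\ forall w, pdom e0 w -> s w = pfun e0 w.
Proof.
move=> he0; have [f [[f1 fB fM] fk fe]] := zorn_total he0.
have hz : GRing.zmod_morphism f by move=> a b; apply: fB.
have hm : GRing.monoid_morphism f by split => // a b; apply: fM.
pose s := mk_rmorph hz hm.
exists s; split => //; split => //.
have sj := surj_fix (s := s) fk.
exists (fun z => projT1 (cid (sj z))).
  move=> w; case: (cid (sj (s w))) => w' /= hw'; exact: (fmorph_inj s hw').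
by move=> z; case: (cid (sj z)).
Qed.

Lemma min_poly_K (x : L) : exists q : {poly K}, [/\ q != 0, (q ^^ iota).[x] = 0 &
  forall g : {poly K}, g != 0 -> (g ^^ iota).[x] = 0 -> (size q <= size g)%N].
Proof.
case: Hsep => Halg _; have [p [pnz _ px]] := Halg x.
pose P n := `[< exists g : {poly K}, [/\ g != 0, (g ^^ iota).[x] = 0 & size g = n] >].
have exP : exists n, P n by exists (size p); apply/asboolP; exists p; split => //; apply/rootP.
case: (ex_minnP exP) => n /asboolP [q [qnz qx qs]] hmin.
exists q; split => // g gnz gx; rewrite qs; apply: hmin; apply/asboolP; by exists g.
Qed.

Lemma galois_quad (x y : L) : (exists g : {poly K}, y ^+ 2 = (g ^^ iota).[x]) ->
  ~ (exists g : {poly K}, y = (g ^^ iota).[x]) ->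
  exists s : {rmorphism L -> L}, [/\ in_GK iota s, s x = x & s y = - y].
Proof.
move=> [gy2 hy2] yn.
have [q0 [q0nz q0x q0min]] := min_poly_K x.
pose e1 := PExt (Dx iota x) id.
have [h1 hB hM hV] := Dx_closed q0nz q0x q0min.
have he1 : valid e1.
  split.
  - exact: (Dx_closed q0nz q0x q0min).
  - by split.
  - by move=> k; split => //; apply: Dx_base.
have hD1 : forall w, pdom e1 w -> pdom e1 (- w).
  move=> w hw.
  by rewrite -sub0r; apply: (hB) => //; rewrite -(subrr 1); apply: (hB).
pose q := 'X^2 - (y ^+ 2)%:P : {poly L}.
have qD : polyOverD e1 q.
  move=> i.
  have h0 : pdom e1 0 by rewrite -(subrr 1); apply: (hB).
  rewrite /q coefB coefXn coefC.
  have hy : pdom e1 (y ^+ 2) by exists gy2.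
  apply: (hB); first by case: (i == 2%N); [exact: h1 | exact: h0].
  by case: (i == 0%N).
have sq : size q = 3%N by rewrite /q size_addl ?size_polyXn // size_opp size_polyC; case: (_ != 0).
have qnz : q != 0 by rewrite -size_poly_eq0 sq.
have qy : q.[y] = 0 by rewrite /q hornerD hornerN hornerXn hornerC subrr.
have qmin : forall g : {poly L}, polyOverD e1 g -> g != 0 -> g.[y] = 0 -> (size q <= size g)%N.
  move=> g gD gnz gy; rewrite sq; case: leqP => // hs.
  exfalso; apply: yn.
  have hg : g.[y] = g`_0 + g`_1 * y.
    rewrite (@horner_coef_wide _ 2 g y hs).
    by rewrite !big_ord_recr big_ord0 /= add0r expr0 mulr1 expr1.
  have [g1|g1nz] := eqVneq (g`_1) 0.
    have : g`_0 != 0.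
      apply: contraNneq gnz => g0; apply/eqP/polyP => i; rewrite coef0.
      case: i => [|[|i]] //; by rewrite nth_default //; apply: (leq_trans hs).
    by move: gy; rewrite hg g1 mul0r addr0 => ->; rewrite eqxx.
  have h : g`_1 * y = - g`_0 by apply/eqP; rewrite -addr_eq0 addrC -hg gy.
  have ey : y = - (g`_0 / g`_1) by rewrite -[y](mulKf g1nz) h mulrN mulrC.
  have : pdom e1 y by rewrite ey; apply: hD1; apply: (hM); [exact: gD | apply: (hV); exact: gD].
  by apply.
have qm : (map_poly (pfun e1) q).[- y] = 0.
  by rewrite map_poly_id // /q hornerD hornerN hornerXn hornerC sqrrN subrr.
have [e2 [he2 ext12 ye2 fy]] := step_poly he1 qD qnz qy qmin qm.
have [s [hs es]] := galois_ext he2.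
exists s; split => //.
  have xe1 : pdom e1 x by apply: Dx_x.
  by rewrite es; [case: ext12 => _ h; rewrite h | case: ext12 => h _; apply: h].
by rewrite es.
Qed.

End Ext.

Section Maps.
Variables (F G : fieldType) (f : {rmorphism F -> G}).

Lemma wmap_cubic a b c : wmap f (wcubic a b c) = wcubic (f a) (f b) (f c).
Proof. by rewrite /wmap /wcubic /=; congr WCoef; rewrite ?rmorph0 ?rmorphN ?rmorphD ?rmorphM. Qed.

Lemma crel_map E E' u r s t : crel E E' u r s t ->
  crel (wmap f E) (wmap f E') (f u) (f r) (f s) (f t).
Proof.
case=> h1 h2 h3 h4 h6; split; rewrite /wmap /=.
- move: (congr1 f h1); rewrite !(rmorph_nat, rmorphM, rmorphD, rmorphN, rmorphXn, rmorph1) => H; exact: H.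
- move: (congr1 f h2); rewrite !(rmorph_nat, rmorphM, rmorphD, rmorphN, rmorphXn, rmorph1) => H; exact: H.
- move: (congr1 f h3); rewrite !(rmorph_nat, rmorphM, rmorphD, rmorphN, rmorphXn, rmorph1) => H; exact: H.
- move: (congr1 f h4); rewrite !(rmorph_nat, rmorphM, rmorphD, rmorphN, rmorphXn, rmorph1) => H; exact: H.
- move: (congr1 f h6); rewrite !(rmorph_nat, rmorphM, rmorphD, rmorphN, rmorphXn, rmorph1) => H; exact: H.
Qed.

Lemma point_map_cmap u r s t P :
  point_map f (cmap u r s t P) = cmap (f u) (f r) (f s) (f t) (point_map f P).
Proof.
by case: P => [[x y]|] //=; rewrite !(rmorphM, rmorphD, rmorphXn).
Qed.

Lemma on_curve_map E P : on_curve (wmap f E) (point_map f P) = on_curve E P.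
Proof.
case: P => [[x y]|] //=; rewrite -(inj_eq (fmorph_inj f)).
by rewrite !(rmorphM, rmorphD, rmorphXn).
Qed.

Lemma point_map_wneg E P : point_map f (wneg E P) = wneg (wmap f E) (point_map f P).
Proof. by case: P => [[x y]|] //=; rewrite !(rmorphM, rmorphB, rmorphN). Qed.

End Maps.

Section PartA.
Variable F : fieldType.
Implicit Types (E : wcoef F).

Lemma disc_cubic (a b c : F) : wdisc (wcubic a b c) = 16 * ((a - b) * (b - c) * (c - a)) ^+ 2.
Proof. by rewrite /wdisc /wcubic /wb2 /wb4 /wb6 /wb8 /=; ring. Qed.

Lemma cubic_distinct E a b c : elliptic E -> wiso E (wcubic a b c) ->
  [/\ a != b, b != c & c != a].
Proof.
move=> hE [u [r [s [t [hu h]]]]].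
have hd : wdisc (wcubic a b c) != 0.
  by apply: contraNneq hE => h0; rewrite /elliptic (crel_disc h) h0 mulr0 eqxx.
move: hd; rewrite disc_cubic mulf_eq0 negb_or => /andP [_].
rewrite sqrf_eq0 !mulf_eq0 !negb_or !subr_eq0 => /andP [/andP [h1 h2] h3].
by split.
Qed.

Lemma cubic_legendre (a b c t : F) : t != 0 -> a - b = t ^+ 2 -> c != a -> c != b ->
  legendre_curve (wcubic a b c).
Proof.
move=> ht hab hca hcb.
have ea : a = b + t ^+ 2 by rewrite -hab; ring.
subst a.
have tt : t ^+ 2 != 0 by rewrite expf_eq0.
exists ((c - b) / t ^+ 2); split.
- by rewrite mulf_neq0 ?invr_eq0 // subr_eq0.
- apply: contra hca => /eqP h; apply/eqP.
  have : c - b = t ^+ 2 by rewrite -[RHS]mul1r -h mulfVK.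
  by move=> h'; rewrite -h'; ring.
exists t, b, 0, 0; split => //.
rewrite /crel /wlegendre /wcubic /=; by split; field; rewrite ?ht.
Qed.

Lemma wcubic_swap12 (a b c : F) : wcubic a b c = wcubic b a c.
Proof. by rewrite /wcubic; congr WCoef; ring. Qed.
Lemma wcubic_swap23 (a b c : F) : wcubic a b c = wcubic a c b.
Proof. by rewrite /wcubic; congr WCoef; ring. Qed.

Lemma sq_legendre E a b c : elliptic E -> wiso E (wcubic a b c) ->
  is_nz_square (a - b) -> legendre_curve E.
Proof.
move=> hE hiso [t [ht htab]].
have [h1 h2 h3] := cubic_distinct hE hiso.
have h2' : c != b by rewrite eq_sym.
have [l [l0 l1 hl]] := cubic_legendre ht (esym htab) h3 h2'.
by exists l; split => //; apply: wiso_trans hl.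
Qed.

Lemma two_one E : elliptic E -> cubic_square_model E -> legendre_curve E.
Proof.
move=> hE [a [b [c [hiso hs]]]].
have P3 : forall x y z : F, (wcubic x y z = wcubic a b c) -> is_nz_square (x - y) ->
    legendre_curve E.
  by move=> x y z e h; apply: (@sq_legendre E x y z hE) => //; rewrite e.
case: hs => [h|[h|[h|[h|[h|h]]]]].
- exact: sq_legendre hiso h.
- by apply: (P3 b a c) => //; rewrite /wcubic; congr WCoef; ring.
- by apply: (P3 b c a) => //; rewrite /wcubic; congr WCoef; ring.
- by apply: (P3 c b a) => //; rewrite /wcubic; congr WCoef; ring.
- by apply: (P3 c a b) => //; rewrite /wcubic; congr WCoef; ring.
- by apply: (P3 a c b) => //; rewrite /wcubic; congr WCoef; ring.
Qed.

Lemma one_two E : legendre_curve E -> cubic_square_model E.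
Proof.
move=> [l [_ _ h]]; exists 0, 1, l; split => //.
by right; left; exists 1; split; rewrite ?oner_eq0 // expr1n subr0.
Qed.

End PartA.

Section Concrete.
Variable F : fieldType.
Hypothesis h2 : (2 : F) != 0.
Implicit Types (E : wcoef F).

Lemma cubic_fcurve (a b c x y : F) :
  fcurve (wcubic a b c) x y = y ^+ 2 - (x - a) * (x - b) * (x - c).
Proof. by rewrite /fcurve /wcubic /=; ring. Qed.

Lemma two_y (y : F) : y + y = 0 -> y = 0.
Proof.
move=> h; have : 2 * y = 0 by rewrite mulr2n mulrDl mul1r.
by move/eqP; rewrite mulf_eq0 (negbTE h2) /= => /eqP.
Qed.

Lemma cubic_2tors (a b c x y : F) : on_curve (wcubic a b c) (Some (x, y)) ->
  wadd (wcubic a b c) (Some (x, y)) (Some (x, y)) = None ->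
  y = 0 /\ (x = a \/ x = b \/ x = c).
Proof.
move=> hc; rewrite wadd_SS // eqxx /=; case: ifP => // /eqP hy _.
have y0 : y = 0 by apply: two_y; move: hy; rewrite mul0r !addr0.
split => //; move: hc; rewrite on_curveS cubic_fcurve y0 expr0n /= sub0r oppr_eq0.
rewrite !mulf_eq0 !subr_eq0 => /orP [/orP [/eqP h|/eqP h]|/eqP h]; tauto.
Qed.

Lemma wadd_wneg E P : P != None -> wadd E P (wneg E P) = None.
Proof.
case: P => [[x y]|] // _; rewrite /wadd /= eqxx /=.
have -> : y + (- y - wa1 E * x - wa3 E) + wa1 E * x + wa3 E = 0 by ring.
by rewrite eqxx.
Qed.

Lemma leg_mul4 (be : F) : be != 0 -> 1 + be != 0 ->
  wmul (wlegendre (1 - be ^+ 2)) 4 (Some (1 + be, be * (1 + be))) = None.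
Proof.
move=> b0 b1.
set E := wlegendre _; set P := Some _.
have hP : on_curve E P by rewrite /P on_curveS cubic_fcurve; apply/eqP; ring.
have hT : on_curve E (Some (1, 0)) by rewrite on_curveS cubic_fcurve; apply/eqP; ring.
have e2 : wadd E P P = Some (1, 0).
  rewrite /P wadd_SS // eqxx /=.
  have hy : be * (1 + be) + be * (1 + be) + 0 * (1 + be) + 0 != 0.
    rewrite mul0r !addr0 -mulr2n -mulr_natr !mulf_neq0 //.
  rewrite (negbTE hy) /slope eqxx /= /addx /addy /=.
  have hD : 2 * (be * (1 + be)) + 0 * (1 + be) + 0 != 0.
    by rewrite mul0r !addr0 !mulf_neq0.
  congr (Some (_, _)); field; rewrite ?b0 ?b1 ?h2 //.
have e3 : wadd E P (Some (1, 0)) = wneg E P.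
  rewrite /P wadd_SS //.
  have hx : (1 + be == 1) = false.
    by apply/negbTE; rewrite -subr_eq0 (_ : 1 + be - 1 = be) //; ring.
  rewrite hx /= /slope.
  have hx' : (1 + be != 1) by rewrite hx.
  rewrite hx' /addx /addy /=.
  have hd : 1 - (1 + be) != 0.
    by rewrite (_ : 1 - (1 + be) = - be) ?oppr_eq0 //; ring.
  congr (Some (_, _)); field; rewrite ?b0 ?b1 ?h2 //.
have e1 : wadd E P None = P by [].
by rewrite /wmul !iterS iter0 e1 e2 e3 wadd_wneg.
Qed.

Lemma mul2_neq0 (y : F) : y != 0 -> y + y != 0.
Proof. by move=> hy; apply: contra hy => /eqP h; apply/eqP; apply: two_y. Qed.

Lemma order4 E x y : wa1 E = 0 -> wa3 E = 0 -> on_curve E (Some (x, y)) -> y != 0 ->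
  wmul E 4 (Some (x, y)) = None ->
  exists l x2, [/\ wadd E (Some (x, y)) (Some (x, y)) = Some (x2, 0),
    x2 = l ^+ 2 - wa2 E - 2 * x &
    l * (2 * y) = 3 * x ^+ 2 + 2 * wa2 E * x + wa4 E].
Proof.
move=> a1 a3 hP hy h4.
set P := Some (x, y).
have hD : y + y + wa1 E * x + wa3 E != 0.
  by rewrite a1 a3 mul0r !addr0; apply: mul2_neq0.
have h2y : 2 * y != 0 by rewrite mulf_neq0.
pose l := slope E x y x y.
have hl : l * (2 * y) = 3 * x ^+ 2 + 2 * wa2 E * x + wa4 E.
  rewrite /l /slope eqxx /= a1 a3 !mul0r !subr0 !addr0; field; by rewrite ?h2 ?hy.
have [x2 [y2 [ex2 ey2 eQ2]]] : exists x2 y2, [/\ x2 = addx E l x x,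
    y2 = addy E l x y x2 & wadd E P P = Some (x2, y2)].
  by exists (addx E l x x), (addy E l x y (addx E l x x)); split => //;
     rewrite /P wadd_SS // eqxx (negbTE hD).
have hQ2 : on_curve E (Some (x2, y2)) by rewrite -eQ2; apply: wadd_on_curve.
have e1 : wadd E P None = P by [].
move: h4; rewrite /wmul !iterS iter0 e1 eQ2.
have hQ3 : on_curve E (wadd E P (Some (x2, y2))) by apply: wadd_on_curve.
case eQ3 : (wadd E P (Some (x2, y2))) hQ3 => [[x3 y3]|] hQ3; last by [].
rewrite /P wadd_SS //; case: ifP => // /andP [/eqP ex3 /eqP ey3] _.
subst x3.
have ey3' : y3 = - y by apply/eqP; rewrite -addr_eq0 addrC; move: ey3; rewrite a1 a3 mul0r !addr0 => ->.
subst y3.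
move: eQ3; rewrite /P wadd_SS //; case: ifP => // /negbT hc [eqx eqy].
exists l, x2; split => //; last by rewrite ex2 /addx a1 mul0r addr0; ring.
case: (eqVneq x x2) => [ex | nx].
  exfalso; rewrite -ex in hc hQ2 eqy.
  have hc' : y + y2 + wa1 E * x + wa3 E != 0 by move: hc; rewrite eqxx.
  move: hP hQ2; rewrite !on_curveS => /eqP c1 /eqP c2.
  have ey := tangent_eq c1 c2 hc'.
  move: eqy; rewrite ey -/l -ex2 -ey2 ey => hyy.
  by move: hy; rewrite (two_y (y := y)) ?eqxx //; rewrite {2}hyy addrN.
have hx : x2 - x != 0 by rewrite subr_eq0 eq_sym.
move: eqx; rewrite /slope nx /addx a1 mul0r addr0 => eqx.
set lc := (y2 - y) / (x2 - x) in eqx.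
have hlc : lc * (x2 - x) = y2 - y by rewrite /lc; field; exact: hx.
have ey2' : y2 = - l * (x2 - x) - y by rewrite ey2 /addy a1 a3 addr0 subr0; ring.
have hsq : (lc - l) * (lc + l) = 0.
  have -> : (lc - l) * (lc + l) = ((lc ^+ 2 - wa2 E - x - x2) - x) -
     ((l ^+ 2 + wa1 E * l - wa2 E - x - x) - x2) by rewrite a1; ring.
  have ex2' : l ^+ 2 + wa1 E * l - wa2 E - x - x = x2 by rewrite ex2.
  by rewrite eqx ex2' !subrr.
move/eqP: hsq; rewrite mulf_eq0 => /orP [/eqP h|/eqP h].
  have elc : lc = l by apply/eqP; rewrite -subr_eq0 h.
  suff -> : y2 = 0 by []; apply: two_y.
  have h' : y2 - y = - (y2 + y) by rewrite -hlc elc ey2'; ring.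
  have -> : y2 + y2 = (y2 - y) + (y2 + y) by ring.
  by rewrite h' addNr.
exfalso.
have elc : lc = - l by apply/eqP; rewrite -addr_eq0 h.
have : y2 - y = y2 + y by rewrite -hlc elc ey2'; ring.
move=> h'; move: hy; rewrite (two_y (y := y)) ?eqxx //.
have -> : y + y = (y2 + y) - (y2 - y) by ring.
by rewrite h' subrr.
Qed.

End Concrete.

Local Notation "p ^^ f" := (map_poly f p) (at level 30, f at level 30).

Section MainLemmas.
Variables (K L : fieldType) (iota : {rmorphism K -> L}).
Hypothesis h2 : (2 : K) != 0.

Lemma h2L : (2 : L) != 0.
Proof. by rewrite -(rmorph_nat iota 2) fmorph_eq0. Qed.

Lemma iota_inj : injective iota. Proof. exact: fmorph_inj. Qed.

Lemma sqrt_exists (Hsep : is_sep_closure iota) (d : L) : exists w, w ^+ 2 = d.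
Proof.
have [->|dnz] := eqVneq d 0; first by exists 0; rewrite expr0n.
case: Hsep => _ Hroot.
pose p := 'X^2 - d%:P : {poly L}.
have sp : size p = 3%N by rewrite /p size_addl ?size_polyXn // size_opp size_polyC dnz.
have sep : separable_poly p.
  rewrite unlock /p derivB derivXn derivC subr0 /= -scaler_nat coprimepZr ?h2L //.
  rewrite -[X in coprimep _ X]subr0 -polyC0 coprimep_XsubC /root hornerD hornerN hornerXn hornerC.
  by rewrite expr0n /= sub0r oppr_eq0.
have sp1 : (1 < size p)%N by rewrite sp.
have [w hw] := Hroot p sep sp1.
exists w; move/rootP: hw; rewrite /p hornerD hornerN hornerXn hornerC.
by move/eqP; rewrite subr_eq0 => /eqP.
Qed.

Lemma lin_rep (c0 c1 : K) (x : L) : x ^+ 2 = iota c1 * x + iota c0 ->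
  forall g : {poly K}, exists u v, (g ^^ iota).[x] = iota u + iota v * x.
Proof.
move=> hx; elim/poly_ind => [|g c [u [v IH]]].
  by exists 0, 0; rewrite map_poly0 horner0 !rmorph0 mul0r addr0.
exists (c + v * c0), (u + v * c1).
have -> : (g * 'X + c%:P) ^^ iota = (g ^^ iota) * 'X + (iota c)%:P.
  by rewrite rmorphD rmorphM /= map_polyX map_polyC.
rewrite hornerD hornerM hornerX hornerC IH.
rewrite !(rmorphD, rmorphM) mulrDl -mulrA -expr2 hx; ring.
Qed.

Lemma y_notin (a b u v : K) (s y : L) :
  a != 0 -> b != 0 -> ~ is_nz_square a -> ~ is_nz_square b ->
  s ^+ 2 = iota (a * b) -> y ^+ 2 = iota (a * b) * (iota a + iota b + 2 * s) -> y != 0 ->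
  y = iota u + iota v * s -> False.
Proof.
move=> ha hb na nb hs hy y0 ey.
have hab : a * b != 0 by rewrite mulf_neq0.
case: (pselect (exists s0, s = iota s0)) => [[s0 es]|ns].
  subst s.
  pose y0' := u + v * s0.
  have ey' : y = iota y0' by rewrite ey /y0' rmorphD rmorphM.
  have hs0 : s0 ^+ 2 = a * b by apply: iota_inj; rewrite rmorphXn hs.
  have hy0 : y0' ^+ 2 = a * b * (a + b + 2 * s0).
    apply: iota_inj; rewrite rmorphXn -ey' hy.
    by rewrite !(rmorphM, rmorphD, rmorph_nat).
  have y0nz : y0' != 0 by apply: contra y0 => /eqP h; rewrite ey' h rmorph0.
  have hw : a + b + 2 * s0 != 0.
    apply: contra y0nz => /eqP h; move: hy0; rewrite h mulr0 => /eqP.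
    by rewrite expf_eq0.
  have asq : ((a + s0) * s0 / y0') ^+ 2 = a.
    rewrite expr_div_n exprMn hs0 hy0.
    have -> : (a + s0) ^+ 2 = a * (a + b + 2 * s0).
      have -> : (a + s0) ^+ 2 = a ^+ 2 + 2 * a * s0 + s0 ^+ 2 by ring.
      by rewrite hs0; ring.
    field; apply/andP; split => //; apply/andP; split => //.
  apply: na; exists ((a + s0) * s0 / y0'); split => //.
  by apply: contra ha => /eqP h; rewrite -asq h expr0n.
pose d := u ^+ 2 + v ^+ 2 * (a * b) - a * b * (a + b).
pose c := 2 * a * b - 2 * u * v.
have hs' : s ^+ 2 = iota a * iota b by rewrite hs rmorphM.
have eq : (iota u + iota v * s) ^+ 2 = iota a * iota b * (iota a + iota b + 2 * s).
  by rewrite -ey hy rmorphM.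
have key : iota d = iota c * s.
  rewrite /d /c !(rmorphD, rmorphN, rmorphM, rmorphXn, rmorph_nat).
  apply/eqP; rewrite -subr_eq0; apply/eqP.
  transitivity ((iota u + iota v * s) ^+ 2 - iota a * iota b * (iota a + iota b + 2 * s)
     + iota v ^+ 2 * (iota a * iota b - s ^+ 2)); first by ring.
  by rewrite eq hs' !subrr mulr0 addr0.
have c0 : c = 0.
  case: (eqVneq c 0) => // cnz; exfalso; apply: ns.
  exists (d / c); rewrite fmorph_div key mulrAC divff ?mul1r //.
  by rewrite fmorph_eq0.
have d0 : d = 0 by apply: iota_inj; rewrite key c0 rmorph0 mul0r.
have huv : u * v = a * b.
  apply: (mulfI h2); apply/eqP; rewrite -subr_eq0; apply/eqP.
  transitivity (- c); first by rewrite /c; ring.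
  by rewrite c0 oppr0.
have vnz : v != 0 by apply: contra hab => /eqP v0; rewrite -huv v0 mulr0.
have hprod : a * b * ((v ^+ 2 - a) * (v ^+ 2 - b)) = 0.
  transitivity (v ^+ 2 * d - ((u * v) ^+ 2 - (a * b) ^+ 2)); first by rewrite /d; ring.
  by rewrite d0 huv mulr0 subrr subr0.
move/eqP: hprod; rewrite mulf_eq0 (negbTE hab) /= mulf_eq0 !subr_eq0.
case/orP => /eqP h.
  by apply: na; exists v; split.
by apply: nb; exists v; split.
Qed.

End MainLemmas.

Section Final.
Variables (K L : fieldType) (iota : {rmorphism K -> L}).
Hypothesis h2 : (2 : K) != 0.
Hypothesis Hsep : is_sep_closure iota.

Lemma one_three E : legendre_curve E -> cond3 iota E.
Proof.
move=> [l [l0 l1 [u [r [s [t [hu h]]]]]]].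
have hL : crel (wmap iota E) (wlegendre (iota l)) (iota u) (iota r) (iota s) (iota t).
  by have := crel_map iota h; rewrite /wlegendre wmap_cubic rmorph0 rmorph1.
have hU : iota u != 0 by rewrite fmorph_eq0.
have hLi := crel_inv hU hL.
have hUi : (iota u)^-1 != 0 by rewrite invr_eq0.
pose phi := cmap (iota u) (iota r) (iota s) (iota t).
pose psi := cmap (iota u)^-1 (- iota r / iota u ^+ 2) (- iota s / iota u)
  ((iota r * iota s - iota t) / iota u ^+ 3).
have psiphi : forall Q, psi (phi Q) = Q by move=> Q; apply: cmap_invK.
have phipsi : forall Q, phi (psi Q) = Q.
  move=> Q; apply: (@cmap_inj L (iota u)^-1 (- iota r / iota u ^+ 2) (- iota s / iota u)
    ((iota r * iota s - iota t) / iota u ^+ 3) _ _ hUi).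
  exact: (psiphi (psi Q)).
have h2l := h2L iota h2.
split.
  move=> P hP hnz h2P.
  have hP' : on_curve (wlegendre (iota l)) (psi P) by rewrite /psi (cmap_on_curve _ hLi hUi).
  have h2P' : wadd (wlegendre (iota l)) (psi P) (psi P) = None.
    by rewrite /psi -(cmap_add hLi hUi hP hP) h2P.
  case eP' : (psi P) hP' h2P' => [[x' y'] |] hP' h2P'; last first.
    by move: hnz; rewrite -(phipsi P) eP'.
  have [y0 hx] := cubic_2tors h2l hP' h2P'.
  have [e [ex he]] : exists e, x' = iota e /\ (e = 0 \/ e = 1 \/ e = l).
    case: hx => [->|[->|->]].
    - by exists 0; rewrite rmorph0; split => //; left.
    - by exists 1; rewrite rmorph1; split => //; right; left.
    - by exists l; split => //; right; right.
  exists (cmap u r s t (Some (e, 0))); split.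
    rewrite (cmap_on_curve _ h hu) on_curveS cubic_fcurve; apply/eqP.
    by case: he => [->|[->|->]]; ring.
  rewrite point_map_cmap.
  have -> : point_map iota (Some (e, 0)) = psi P by rewrite eP' ex y0 /= rmorph0.
  by rewrite -[LHS]phipsi.
have [be hbe] := sqrt_exists h2 Hsep (iota (1 - l)).
have b0 : be != 0.
  apply: contra l1 => /eqP b0; move: hbe; rewrite b0 expr0n /= => /esym /eqP.
  by rewrite fmorph_eq0 subr_eq0 eq_sym.
have b1 : 1 + be != 0.
  apply: contra l0 => /eqP b1.
  have : be = -1 by apply/eqP; rewrite -addr_eq0 addrC b1.
  move=> bm; move: hbe; rewrite bm sqrrN expr1n => /esym /eqP.
  rewrite -(rmorph1 iota) (inj_eq (fmorph_inj iota)) => /eqP h1.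
  by apply/eqP; transitivity (1 - (1 - l)); [ring | rewrite h1 subrr].
have el : iota l = 1 - be ^+ 2 by rewrite hbe rmorphB rmorph1; ring.
pose P' := Some (1 + be, be * (1 + be)).
have hP' : on_curve (wlegendre (iota l)) P'.
  by rewrite el /P' on_curveS cubic_fcurve; apply/eqP; ring.
exists (phi P'); split.
- by rewrite /phi (cmap_on_curve _ hL hU).
- have [_ e4] := cmap_mul 4 hL hU hP'.
  by rewrite /phi -e4 /P' el leg_mul4.
move=> [sg [[_ sgfix] esg]].
have esg' : point_map sg P' = wneg (wlegendre (iota l)) P'.
  apply: (cmap_inj hU (r := iota r) (s := iota s) (t := iota t)).
  rewrite (cmap_neg _ hL) -[cmap _ _ _ _ P']/(phi P') -esg point_map_cmap.
  by rewrite !sgfix.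
move: esg'; rewrite /P' /= => [[h1 h2']].
have sb : sg be = be by move: h1; rewrite rmorphD rmorph1 => /addrI.
move: h2'; rewrite rmorphM h1 sb mul0r !subr0 => /eqP.
rewrite -subr_eq0 opprK => /eqP /two_y => /(_ h2l) /eqP.
by rewrite mulf_eq0 (negbTE b0) (negbTE b1).
Qed.

Lemma id_GK : in_GK iota (idfun : {rmorphism L -> L}).
Proof. by split => //; exists idfun. Qed.

Lemma three_one E : elliptic E -> cond3 iota E -> legendre_curve E.
Proof.
move=> hE [H2 [P [hP h4 hno]]].
case: (pselect (cubic_square_model E)) => [hc|hnc]; first exact: two_one.
exfalso.
have h4K : (4 : K) != 0.
  by rewrite (_ : (4 : K) = 2 * 2); [rewrite mulf_neq0 | ring].
pose A := wb2 E / 4; pose B := wb4 E / 2; pose C := wb6 E / 4.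
pose E' := WCoef 0 A 0 B C.
pose s0 := - wa1 E / 2; pose t0 := - wa3 E / 2.
have hcr : crel E E' 1 0 s0 t0.
  rewrite /crel /E' /A /B /C /s0 /t0 /wb2 /wb4 /wb6 /=.
  by split; field; rewrite ?h2 ?h4K.
have hL : crel (wmap iota E) (wmap iota E') 1 0 (iota s0) (iota t0).
  by have := crel_map iota hcr; rewrite rmorph1 rmorph0.
have a1' : wa1 (wmap iota E') = 0 by rewrite /= rmorph0.
have a3' : wa3 (wmap iota E') = 0 by rewrite /= rmorph0.
have h2l := h2L iota h2.
have one0 : (1 : L) != 0 := oner_neq0 _.
have hLi := crel_inv one0 hL.
have one0' : (1 : L)^-1 != 0 by rewrite invr_eq0.
pose phi := cmap 1 0 (iota s0) (iota t0).
pose psi := cmap 1^-1 (- 0 / 1 ^+ 2) (- iota s0 / 1) ((0 * iota s0 - iota t0) / 1 ^+ 3).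
have psiphi : forall Q, psi (phi Q) = Q by move=> Q; apply: cmap_invK.
have phipsi : forall Q, phi (psi Q) = Q.
  move=> Q; apply: (@cmap_inj L 1^-1 (- 0 / 1 ^+ 2) (- iota s0 / 1)
    ((0 * iota s0 - iota t0) / 1 ^+ 3) _ _ one0').
  exact: (psiphi (psi Q)).
have hP' : on_curve (wmap iota E') (psi P) by rewrite /psi (cmap_on_curve _ hLi one0').
have h4' : wmul (wmap iota E') 4 (psi P) = None.
  by have [_ <-] := cmap_mul 4 hLi one0' hP; rewrite h4.
have transfer : forall sg : {rmorphism L -> L}, in_GK iota sg ->
    point_map sg (psi P) = wneg (wmap iota E') (psi P) -> False.
  move=> sg hsg e; apply: hno; exists sg; split => //.
  case: hsg => _ sgfix.
  rewrite -{1}(phipsi P) /phi point_map_cmap rmorph1 rmorph0 !sgfix e.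
  by rewrite (cmap_neg _ hL) -/phi phipsi.
have rat : forall z : L, on_curve (wmap iota E') (Some (z, 0)) -> exists e, z = iota e.
  move=> z hz.
  have hz2 : wadd (wmap iota E') (Some (z, 0)) (Some (z, 0)) = None.
    by rewrite wadd_SS // eqxx a1' a3' mul0r !addr0 eqxx.
  have hR : on_curve (wmap iota E) (phi (Some (z, 0))) by rewrite /phi (cmap_on_curve _ hL one0).
  have hR2 : wadd (wmap iota E) (phi (Some (z, 0))) (phi (Some (z, 0))) = None.
    by rewrite /phi -(cmap_add hL one0 hz hz) hz2.
  have [Q [hQ eQ]] := H2 _ hR isT hR2.
  case: Q hQ eQ => [[q1 q2]|] hQ eQ; last by [].
  exists q1; move: eQ; rewrite /phi /= => [[e1 _]].
  by move: e1; rewrite expr1n mul1r addr0.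
case eP' : (psi P) hP' h4' => [[x y]|] hP' h4'; last first.
  by apply: (transfer _ id_GK); rewrite eP'.
have [y0|ynz] := eqVneq y 0.
  apply: (transfer _ id_GK); rewrite eP' y0 /wneg a1' a3' /=.
  by rewrite mul0r !subr0 oppr0.
have [l [x2 [e2P ex2 hl]]] := order4 h2l a1' a3' hP' ynz h4'.
have hx2 : on_curve (wmap iota E') (Some (x2, 0)) by rewrite -e2P; apply: wadd_on_curve.
have [e1 ex1] := rat _ hx2.
have cK : e1 ^+ 3 + A * e1 ^+ 2 + B * e1 + C = 0.
  have : fcurve (wmap iota E') (iota e1) 0 = 0 by apply/eqP; rewrite -on_curveS -ex1.
  rewrite /fcurve /E' /= !rmorph0 expr0n /= !mul0r !addr0 sub0r => /eqP; rewrite oppr_eq0 => /eqP hc.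
  by apply: (fmorph_inj iota); rewrite rmorph0 -hc !(rmorphD, rmorphM, rmorphXn).
pose p1 := A + e1; pose p0 := B + e1 * p1.
have hC : C = - (e1 * p0).
  have : C + e1 * p0 = 0 by rewrite -cK /p0 /p1; ring.
  by move/eqP; rewrite addr_eq0 => /eqP.
have [w hw] := sqrt_exists h2 Hsep (iota (p1 ^+ 2 - 4 * p0)).
pose z := (w - iota p1) / 2.
have hz : z ^+ 2 + iota p1 * z + iota p0 = 0.
  transitivity ((w ^+ 2 - iota (p1 ^+ 2 - 4 * p0)) / 4).
    rewrite /z !(rmorphD, rmorphN, rmorphM, rmorphXn, rmorph_nat); field.
    by rewrite (_ : (4 : L) = 2 * 2) ?mulf_neq0 //; ring.
  by rewrite hw subrr mul0r.
have hzc : on_curve (wmap iota E') (Some (z, 0)).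
  rewrite on_curveS /fcurve /E' /=; apply/eqP.
  transitivity (- ((z - iota e1) * (z ^+ 2 + iota p1 * z + iota p0))); last first.
    by rewrite hz mulr0 oppr0.
  rewrite hC /p0 /p1 !(rmorphD, rmorphN, rmorphM, rmorphXn, rmorph0); ring.
have [e2 ez] := rat _ hzc.
have hq2 : e2 ^+ 2 + p1 * e2 + p0 = 0.
  by apply: (fmorph_inj iota); rewrite rmorph0 -hz ez !(rmorphD, rmorphM, rmorphXn).
pose e3 := - p1 - e2.
have hp0 : p0 = - (e2 ^+ 2 + p1 * e2).
  by apply/eqP; rewrite -addr_eq0 addrC hq2.
have eE' : E' = wcubic e1 e2 e3.
  rewrite /E' /wcubic; congr WCoef.
  - by rewrite /e3 /p1; ring.
  - apply/eqP; rewrite -subr_eq0; apply/eqP.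
    transitivity (e2 ^+ 2 + p1 * e2 + p0); last exact: hq2.
    by rewrite /e3 /p0; ring.
  - by rewrite hC hp0 /e3; ring.
have hiso : wiso E (wcubic e1 e2 e3).
  by exists 1, 0, s0, t0; split; [exact: oner_neq0 | rewrite -eE'].
have na : ~ is_nz_square (e1 - e2).
  by move=> hs; apply: hnc; exists e1, e2, e3; split => //; left.
have nb : ~ is_nz_square (e1 - e3).
  by move=> hs; apply: hnc; exists e1, e2, e3; split => //; right; right; right; right; right.
have [d12 d23 d31] := cubic_distinct hE hiso.
have anz : e1 - e2 != 0 by rewrite subr_eq0.
have bnz : e1 - e3 != 0 by rewrite subr_eq0 eq_sym.
move: hP' ex2 hl; rewrite eE' wmap_cubic => hP' ex2 hl.
have hcurve : y ^+ 2 = (x - iota e1) * (x - iota e2) * (x - iota e3).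
  by move: hP'; rewrite on_curveS cubic_fcurve subr_eq0 => /eqP.
pose sx := x - iota e1.
have hs : sx ^+ 2 = iota ((e1 - e2) * (e1 - e3)).
  have hl2 : l ^+ 2 = 2 * x - iota e2 - iota e3.
    have : l ^+ 2 = x2 + wa2 (wcubic (iota e1) (iota e2) (iota e3)) + 2 * x by rewrite ex2; ring.
    by rewrite ex1 /= => ->; ring.
  have hsq : (sx ^+ 2 - iota (e1 - e2) * iota (e1 - e3)) ^+ 2 = 0.
    transitivity ((l * (2 * y)) ^+ 2 - 4 * l ^+ 2 * y ^+ 2); last by ring.
    rewrite hl hl2 hcurve /sx /= !rmorphB; ring.
  move/eqP: hsq; rewrite expf_eq0 /= subr_eq0 => /eqP ->.
  by rewrite rmorphM.
have hy2 : y ^+ 2 = iota ((e1 - e2) * (e1 - e3)) *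
    (iota (e1 - e2) + iota (e1 - e3) + 2 * sx).
  rewrite hcurve.
  transitivity (sx * sx ^+ 2 + (iota (e1 - e2) + iota (e1 - e3)) * sx ^+ 2 +
     iota (e1 - e2) * iota (e1 - e3) * sx).
    by rewrite /sx !rmorphB; ring.
  by rewrite hs rmorphM; ring.
have hx2' : x ^+ 2 = iota (2 * e1) * x + iota ((e1 - e2) * (e1 - e3) - e1 ^+ 2).
  have : (x - iota e1) ^+ 2 = iota ((e1 - e2) * (e1 - e3)) by exact: hs.
  move=> h; rewrite rmorphB rmorphXn -h rmorphM rmorph_nat; ring.
have yn : ~ (exists g : {poly K}, y = (g ^^ iota).[x]).
  move=> [g eg]; have [u [v euv]] := lin_rep hx2' g.
  apply: (y_notin h2 anz bnz na nb hs hy2 ynz (u := u + v * e1) (v := v)).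
  by rewrite eg euv /sx rmorphD rmorphM; ring.
have y2in : exists g : {poly K}, y ^+ 2 = (g ^^ iota).[x].
  exists (('X - e1%:P) * ('X - e2%:P) * ('X - e3%:P)).
  by rewrite !rmorphM /= !map_polyXsubC !hornerM !hornerXsubC.
have [sg [hsg sx' sy']] := galois_quad Hsep y2in yn.
apply: (transfer sg hsg).
rewrite eP' /wneg a1' a3' /= sx' sy' mul0r !subr0.
by [].
Qed.

End Final.

Unset Implicit Arguments.

Theorem mainTheorem4 (K L : fieldType) (iota : {rmorphism K -> L}) (E : wcoef K) :
  (2 : K) != 0 -> is_sep_closure iota -> elliptic E ->
  (legendre_curve E <-> cubic_square_model E) /\
  (legendre_curve E <-> cond3 iota E).
Proof.
move=> h2 Hsep hE; split; split.
- exact: one_two.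
- exact: two_one.
- exact: (one_three h2 Hsep).
- exact: (three_one h2 Hsep).
Qed.
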